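(* For $A \in \mathbb{Q}$ let $$g_A(x) = b_3\,(x(x-15))^3 + b_2\,(x(x-15))^2 + b_1\,x(x-15) + b_0,$$ where $$b_0 = 36\,(128941675300A^4+235814377620A^3+34730973441A^2-216866857320A-132565503600),$$ $$b_1 = 4(A-1)(254A+219)(354070194A^2+848446325A+620203644),$$ $$b_2 = (A-1)(254A+219)(35708622A^2+96399845A+73722213),$$ $$b_3 = 4(A-1)(254A+219)(72474A^2+210275A+164709).$$ Then there exist infinitely many $A \in \mathbb{Q}$ such that the curve $C_A : y^2 = g_A(x)$ contains $16$ rational points in arithmetic progression.
   Context: Rational points $P_j = (x_j, y_j) \in \mathbb{Q}^2$, $j=1,\dots,n$, on a curve $y^2 = g(x)$ are said to be in arithmetic progression if their $x$-coordinates form an arithmetic progression, i.e. $x_j = x_1 + (j-1)d$ for some nonzero $d \in \mathbb{Q}$; $n$ is the length of the progression. *)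

(* Defs.v *)
From Stdlib Require Import BinNat.
From HB Require Import structures.
From mathcomp Require Import all_boot all_order all_algebra.
Set Implicit Arguments. Unset Strict Implicit. Unset Printing Implicit Defensive.
Import Order.TTheory GRing.Theory Num.Theory.
Local Open Scope ring_scope.

(* Large numerals: unary nat literals are infeasible, so we write big
   constants as binary BinNums.N literals mapped into rat. *)
Fixpoint ratP (p : BinNums.positive) : rat :=
  match p with
  | BinNums.xH => 1
  | BinNums.xO q => 2 * ratP q
  | BinNums.xI q => 2 * ratP q + 1
  end.
Definition ratN (n : BinNums.N) : rat :=
  match n with BinNums.N0 => 0 | BinNums.Npos p => ratP p end.
Notation "[Q n ]" := (ratN n%num) (format "[Q  n ]").

Definition b0 (A : rat) : rat :=
  36 * ([Q 128941675300] * A ^+ 4 + [Q 235814377620] * A ^+ 3 + [Q 34730973441] * A ^+ 2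
        - [Q 216866857320] * A - [Q 132565503600]).
Definition b1 (A : rat) : rat :=
  4 * (A - 1) * ([Q 254] * A + [Q 219]) * ([Q 354070194] * A ^+ 2 + [Q 848446325] * A + [Q 620203644]).
Definition b2 (A : rat) : rat :=
  (A - 1) * ([Q 254] * A + [Q 219]) * ([Q 35708622] * A ^+ 2 + [Q 96399845] * A + [Q 73722213]).
Definition b3 (A : rat) : rat :=
  4 * (A - 1) * ([Q 254] * A + [Q 219]) * ([Q 72474] * A ^+ 2 + [Q 210275] * A + [Q 164709]).

Definition gA (A x : rat) : rat :=
  let t := x * (x - 15) in
  b3 A * t ^+ 3 + b2 A * t ^+ 2 + b1 A * t + b0 A.

Definition has_AP_points (g : rat -> rat) (n : nat) : Prop :=
  exists (x1 d : rat) (y : nat -> rat),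
    d != 0 /\ forall j : nat, (j < n)%N -> y j ^+ 2 = g (x1 + j%:R * d).

(* Main.v *)
Require Import Defs.
From Stdlib Require Import BinNat PArith.
From HB Require Import structures.
From mathcomp Require Import all_boot all_order all_algebra.
From mathcomp Require Import ring.
From mathcomp.algebra_tactics Require common.
Set Implicit Arguments. Unset Strict Implicit. Unset Printing Implicit Defensive.
Import GRing.Theory Num.Theory.
Local Open Scope ring_scope.

Definition nd3 (a : int) : bool := ~~ (3 %| a)%Z.
Definition U3 (r : rat) := exists a b : int, [/\ nd3 a, nd3 b & r = a%:~R / b%:~R].
Definition I3 (r : rat) := exists a b : int, nd3 b /\ r = a%:~R / b%:~R.

Lemma nd3M a b : nd3 a -> nd3 b -> nd3 (a * b).
Proof. by rewrite /nd3 !dvdzE abszM Euclid_dvdM // => /negPf -> /negPf ->. Qed.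

Lemma nd3_add3 a b : nd3 a -> nd3 (a + 3 * b).
Proof.
rewrite /nd3; apply: contra => /dvdzP [q Hq].
apply/dvdzP; exists (q - b). by rewrite mulrBl -Hq; ring.
Qed.

Lemma nd3_neq0 a : nd3 a -> a != 0.
Proof. by apply: contra => /eqP ->; exact: dvdz0. Qed.

Lemma nd3N a : nd3 a -> nd3 (- a).
Proof. by rewrite /nd3 !dvdzE abszN. Qed.

Lemma nd3_31 k : nd3 (3 * k + 1).
Proof.
rewrite /nd3; apply/negP => /dvdzP [q Hq].
have : (3 %| 1)%Z by apply/dvdzP; exists (q - k); rewrite mulrBl -Hq; ring.
by rewrite dvdz1.
Qed.

Lemma nd3_32 k : nd3 (3 * k + 2).
Proof.
rewrite /nd3; apply/negP => /dvdzP [q Hq].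
have : (3 %| 2)%Z by apply/dvdzP; exists (q - k); rewrite mulrBl -Hq; ring.
by [].
Qed.

Lemma intr_neq0 (b : int) : b != 0 -> (b%:~R : rat) != 0.
Proof. by rewrite intr_eq0. Qed.

Lemma I3_int (a : int) : I3 a%:~R.
Proof. exists a, 1; split; first by []. by rewrite divr1. Qed.

Lemma I3_nat (n : nat) : I3 n%:R.
Proof. have := I3_int n. by rewrite pmulrn. Qed.

Lemma I3D x y : I3 x -> I3 y -> I3 (x + y).
Proof.
move=> [a [b [hb ->]]] [c [d [hd ->]]].
exists (a * d + c * b), (b * d); split; first exact: nd3M.
have b0 := intr_neq0 (nd3_neq0 hb); have d0 := intr_neq0 (nd3_neq0 hd).
rewrite !(intrD, intrM); field; by rewrite ?b0 ?d0.
Qed.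

Lemma I3M x y : I3 x -> I3 y -> I3 (x * y).
Proof.
move=> [a [b [hb ->]]] [c [d [hd ->]]].
exists (a * c), (b * d); split; first exact: nd3M.
have b0 := intr_neq0 (nd3_neq0 hb); have d0 := intr_neq0 (nd3_neq0 hd).
rewrite !intrM; field; by rewrite ?b0 ?d0.
Qed.

Lemma I3N x : I3 x -> I3 (- x).
Proof.
move=> [a [b [hb ->]]]. exists (- a), b; split => //. by rewrite intrN mulNr.
Qed.

Lemma I3B x y : I3 x -> I3 y -> I3 (x - y).
Proof. by move=> hx hy; apply: I3D => //; apply: I3N. Qed.

Lemma I3X x n : I3 x -> I3 (x ^+ n).
Proof.
move=> hx; elim: n => [|n IH]; first by rewrite expr0; exact: (I3_nat 1).
by rewrite exprS; apply: I3M.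
Qed.

Lemma U3_I3 x : U3 x -> I3 x.
Proof. by move=> [a [b [_ hb ->]]]; exists a, b. Qed.

Lemma U3M x y : U3 x -> U3 y -> U3 (x * y).
Proof.
move=> [a [b [ha hb ->]]] [c [d [hc hd ->]]].
exists (a * c), (b * d); split; try exact: nd3M.
have b0 := intr_neq0 (nd3_neq0 hb); have d0 := intr_neq0 (nd3_neq0 hd).
rewrite !intrM; field; by rewrite ?b0 ?d0.
Qed.

Lemma U3V x : U3 x -> U3 (x^-1).
Proof.
move=> [a [b [ha hb ->]]]. exists b, a; split => //.
by rewrite invf_div.
Qed.

Lemma U3N x : U3 x -> U3 (- x).
Proof.
move=> [a [b [ha hb ->]]]. exists (- a), b; split => //; first exact: nd3N.
by rewrite intrN mulNr.
Qed.

Lemma U3_add3 u x : U3 u -> I3 x -> U3 (u + 3 * x).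
Proof.
move=> [a [b [ha hb ->]]] [c [d [hd ->]]].
exists (a * d + 3 * (c * b)), (b * d); split; try exact: nd3M.
  by apply: nd3_add3; apply: nd3M.
have b0 := intr_neq0 (nd3_neq0 hb); have d0 := intr_neq0 (nd3_neq0 hd).
rewrite !(intrD, intrM); field; by rewrite ?b0 ?d0.
Qed.

Lemma U3_neq0 u : U3 u -> u != 0.
Proof.
move=> [a [b [ha hb ->]]].
by rewrite mulf_neq0 // ?invr_eq0 intr_neq0 // nd3_neq0.
Qed.

Lemma U3_1 : U3 1.
Proof. by exists 1, 1; split => //; rewrite divr1. Qed.

Lemma U3_natfrac (n m : nat) : nd3 n%:Z -> nd3 m%:Z -> U3 (n%:R / m%:R).
Proof. by move=> hn hm; exists n%:Z, m%:Z; split => //; rewrite !pmulrn. Qed.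

Lemma U3_inj (m n : nat) u u' : U3 u -> U3 u' -> 3 ^+ m * u = 3 ^+ n * u' -> m = n.
Proof.
wlog lemn : m n u u' / (m <= n)%N.
  move=> W hu hu' E. case: (leqP m n) => h; first exact: W E.
  by symmetry; apply: (W n m u' u); rewrite ?E // ltnW.
move=> hu hu' E. apply/eqP; rewrite eqn_leq lemn /= leqNgt; apply/negP => ltmn.
have E2 : u = 3 ^+ (n - m) * u'.
  have h3 : (3 : rat) ^+ m != 0 by rewrite expf_neq0.
  apply: (mulfI h3). by rewrite E mulrA -exprD subnKC.
move: hu hu' E2 => [a [b [ha hb ->]]] [c [d [hc hd ->]]] E2.
have b0 := intr_neq0 (nd3_neq0 hb); have d0 := intr_neq0 (nd3_neq0 hd).
pose z : int := 3 ^+ (n - m).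
have hz : (z%:~R : rat) = 3 ^+ (n - m) by rewrite /z rmorphXn.
rewrite -hz in E2.
have Ei : (a * d)%:~R = ((z * c * b)%:~R : rat).
  rewrite !intrM. move: E2; move: (z%:~R : rat) => Zr E2.
  have -> : (a%:~R : rat) = a%:~R / b%:~R * b%:~R by field; rewrite ?b0.
  by rewrite E2; field; rewrite ?b0 ?d0.
move/intr_inj: Ei => Ei.
have : (3 %| a * d)%Z.
  rewrite Ei; apply: dvdz_mulr; apply: dvdz_mulr.
  rewrite /z. have -> : (n - m = (n - m).-1.+1)%N by rewrite prednK // subn_gt0.
  rewrite exprS.
  by apply: dvdz_mulr; exact: dvdzz.
by move: (nd3M ha hd); rewrite /nd3 => /negP.
Qed.
Lemma natr2 (n : nat) : ((2 * n)%coq_nat)%:R = 2 * n%:R :> rat.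
Proof. by rewrite -[(2*n)%coq_nat]/(2*n)%N natrM. Qed.
Lemma ratP_nat (p : positive) : Defs.ratP p = (Pos.to_nat p)%:R.
Proof.
elim: p => [p IH|p IH|] /=.
- rewrite Pos2Nat.inj_xI IH -[(2 * Pos.to_nat p)%coq_nat]/(2 * Pos.to_nat p)%N. by rewrite -[in RHS]natr1 natrM.
- rewrite Pos2Nat.inj_xO IH -[(2 * Pos.to_nat p)%coq_nat]/(2 * Pos.to_nat p)%N. by rewrite natrM.
- by [].
Qed.
Lemma ratN_uint d : ratN (N.of_num_uint d) = (Nat.of_num_uint d)%:R.
Proof.
case: d => [d|d].
- rewrite /= -common.uint_N_nat. case: (N.of_uint d) => [|p] //=. exact: ratP_nat.
- rewrite /= -common.hex_uint_N_nat. case: (N.of_hex_uint d) => [|p] //=. exact: ratP_nat.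
Qed.
Lemma ratN_uint2 d n : N.of_num_uint d = n -> ratN n = (Nat.of_num_uint d)%:R.
Proof. by move=> <-; exact: ratN_uint. Qed.
Lemma qE128941675300 : [Q 128941675300] = 128941675300%:R. Proof. by apply: ratN_uint2. Qed.
Lemma qE132565503600 : [Q 132565503600] = 132565503600%:R. Proof. by apply: ratN_uint2. Qed.
Lemma qE164709 : [Q 164709] = 164709%:R. Proof. by apply: ratN_uint2. Qed.
Lemma qE210275 : [Q 210275] = 210275%:R. Proof. by apply: ratN_uint2. Qed.
Lemma qE216866857320 : [Q 216866857320] = 216866857320%:R. Proof. by apply: ratN_uint2. Qed.
Lemma qE219 : [Q 219] = 219%:R. Proof. by rewrite /ratN ratP_nat. Qed.
Lemma qE235814377620 : [Q 235814377620] = 235814377620%:R. Proof. by apply: ratN_uint2. Qed.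
Lemma qE254 : [Q 254] = 254%:R. Proof. by rewrite /ratN ratP_nat. Qed.
Lemma qE34730973441 : [Q 34730973441] = 34730973441%:R. Proof. by apply: ratN_uint2. Qed.
Lemma qE354070194 : [Q 354070194] = 354070194%:R. Proof. by apply: ratN_uint2. Qed.
Lemma qE35708622 : [Q 35708622] = 35708622%:R. Proof. by apply: ratN_uint2. Qed.
Lemma qE620203644 : [Q 620203644] = 620203644%:R. Proof. by apply: ratN_uint2. Qed.
Lemma qE72474 : [Q 72474] = 72474%:R. Proof. by apply: ratN_uint2. Qed.
Lemma qE73722213 : [Q 73722213] = 73722213%:R. Proof. by apply: ratN_uint2. Qed.
Lemma qE848446325 : [Q 848446325] = 848446325%:R. Proof. by apply: ratN_uint2. Qed.
Lemma qE96399845 : [Q 96399845] = 96399845%:R. Proof. by apply: ratN_uint2. Qed.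

Definition Qq (A : rat) : rat := 128941675300%:R * A ^+ 4 + 235814377620%:R * A ^+ 3 + 34730973441%:R * A ^+ 2 - 216866857320%:R * A - 132565503600%:R.

Definition yv (A V : rat) (j : nat) : rat :=
  match j with
  | 0 => 6 * V
  | 1 => ((- 255510%:R) + 511020%:R * A + 1086864%:R * A ^+ 2)
  | 2 => ((- 987534%:R) + (- 709680%:R) * A + 354840%:R * A ^+ 2)
  | 3 => ((- 770724%:R) + (- 675030%:R) * A + 103380%:R * A ^+ 2)
  | 4 => (408060%:R + 617070%:R * A + 317244%:R * A ^+ 2)
  | 5 => (255510%:R + 732024%:R * A + 354840%:R * A ^+ 2)
  | 6 => (454050%:R + 624420%:R * A + 263904%:R * A ^+ 2)
  | 7 => (599904%:R + 647730%:R * A + 94740%:R * A ^+ 2)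
  | 8 => (599904%:R + 647730%:R * A + 94740%:R * A ^+ 2)
  | 9 => (454050%:R + 624420%:R * A + 263904%:R * A ^+ 2)
  | 10 => (255510%:R + 732024%:R * A + 354840%:R * A ^+ 2)
  | 11 => (408060%:R + 617070%:R * A + 317244%:R * A ^+ 2)
  | 12 => ((- 770724%:R) + (- 675030%:R) * A + 103380%:R * A ^+ 2)
  | 13 => ((- 987534%:R) + (- 709680%:R) * A + 354840%:R * A ^+ 2)
  | 14 => ((- 255510%:R) + 511020%:R * A + 1086864%:R * A ^+ 2)
  | _ => 6 * V
  end.

Ltac qnum := rewrite ?qE128941675300 ?qE132565503600 ?qE164709 ?qE210275 ?qE216866857320 ?qE219 ?qE235814377620 ?qE254 ?qE34730973441 ?qE354070194 ?qE35708622 ?qE620203644 ?qE72474 ?qE73722213 ?qE848446325 ?qE96399845.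

Lemma gA_sq A V (HV : Qq A = V ^+ 2) (j : nat) : (j < 16)%N -> yv A V j ^+ 2 = gA A (0 + j%:R * 1).
Proof.
move=> hj. rewrite /gA /b0 /b1 /b2 /b3; qnum.
case: j hj => [|j] hj.
  cbn [yv]. have -> : (6 * V) ^+ 2 = 36 * V ^+ 2 by ring. rewrite -HV /Qq. ring.
case: j hj => [|j] hj.
  cbn [yv]. ring.
case: j hj => [|j] hj.
  cbn [yv]. ring.
case: j hj => [|j] hj.
  cbn [yv]. ring.
case: j hj => [|j] hj.
  cbn [yv]. ring.
case: j hj => [|j] hj.
  cbn [yv]. ring.
case: j hj => [|j] hj.
  cbn [yv]. ring.
case: j hj => [|j] hj.
  cbn [yv]. ring.
case: j hj => [|j] hj.
  cbn [yv]. ring.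
case: j hj => [|j] hj.
  cbn [yv]. ring.
case: j hj => [|j] hj.
  cbn [yv]. ring.
case: j hj => [|j] hj.
  cbn [yv]. ring.
case: j hj => [|j] hj.
  cbn [yv]. ring.
case: j hj => [|j] hj.
  cbn [yv]. ring.
case: j hj => [|j] hj.
  cbn [yv]. ring.
case: j hj => [|j] hj.
  cbn [yv]. have -> : (6 * V) ^+ 2 = 36 * V ^+ 2 by ring. rewrite -HV /Qq. ring.
by [].
Qed.
Fact al_key : unit. Proof. exact: tt. Qed.
Definition al : rat := locked_with al_key (6775269%:R).
Lemma alE : al = 6775269%:R. Proof. by rewrite [al]unlock. Qed.
Fact be_key : unit. Proof. exact: tt. Qed.
Definition be : rat := locked_with be_key (15637665111240%:R).
Lemma beE : be = 15637665111240%:R. Proof. by rewrite [be]unlock. Qed.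
Fact ga_key : unit. Proof. exact: tt. Qed.
Definition ga : rat := locked_with ga_key (12356162896580939600%:R).
Lemma gaE : ga = 12356162896580939600%:R. Proof. by rewrite [ga]unlock. Qed.
Fact B2_key : unit. Proof. exact: tt. Qed.
Definition B2 : rat := locked_with B2_key (4*al).
Lemma B2E : B2 = 4*al. Proof. by rewrite [B2]unlock. Qed.
Fact B4_key : unit. Proof. exact: tt. Qed.
Definition B4 : rat := locked_with B4_key (2*be).
Lemma B4E : B4 = 2*be. Proof. by rewrite [B4]unlock. Qed.
Fact B6_key : unit. Proof. exact: tt. Qed.
Definition B6 : rat := locked_with B6_key (4*ga).
Lemma B6E : B6 = 4*ga. Proof. by rewrite [B6]unlock. Qed.
Fact B8_key : unit. Proof. exact: tt. Qed.
Definition B8 : rat := locked_with B8_key (4*al*ga - be^+2).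
Lemma B8E : B8 = 4*al*ga - be^+2. Proof. by rewrite [B8]unlock. Qed.
Fact gf_key : unit. Proof. exact: tt. Qed.
Definition gf := locked_with gf_key (fun T : rat => 1 + al*T + be*T^+2 + ga*T^+3).
Lemma gfE T : gf T = 1 + al*T + be*T^+2 + ga*T^+3. Proof. by rewrite [gf]unlock. Qed.
Fact p3_key : unit. Proof. exact: tt. Qed.
Definition p3 := locked_with p3_key (fun T : rat => 3 + B2*T + 3*B4*T^+2 + 3*B6*T^+3 + B8*T^+4).
Lemma p3E T : p3 T = 3 + B2*T + 3*B4*T^+2 + 3*B6*T^+3 + B8*T^+4. Proof. by rewrite [p3]unlock. Qed.
Fact q4_key : unit. Proof. exact: tt. Qed.
Definition q4 := locked_with q4_key (fun T : rat => 2 + B2*T + 5*B4*T^+2 + 10*B6*T^+3 + 10*B8*T^+4 + (B2*B8 - B4*B6)*T^+5 + (B4*B8 - B6^+2)*T^+6).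
Lemma q4E T : q4 T = 2 + B2*T + 5*B4*T^+2 + 10*B6*T^+3 + 10*B8*T^+4 + (B2*B8 - B4*B6)*T^+5 + (B4*B8 - B6^+2)*T^+6. Proof. by rewrite [q4]unlock. Qed.
Fact Mf_key : unit. Proof. exact: tt. Qed.
Definition Mf := locked_with Mf_key (fun T : rat => p3 T ^+ 2 - 4 * gf T * q4 T).
Lemma MfE T : Mf T = p3 T ^+ 2 - 4 * gf T * q4 T. Proof. by rewrite [Mf]unlock. Qed.
Fact Nr_key : unit. Proof. exact: tt. Qed.
Definition Nr := locked_with Nr_key (fun T : rat => (27101076%:R) + T * ((344028632447280%:R) + T * ((2718355837247806712000%:R) + T * ((14904242033559031341650880000%:R) + T * ((59547426662993639512696588995840000%:R) + T * ((176672002967398884916153944905702046720000%:R) + T * ((389228217317373142618706939918198602609520640000%:R) + T * ((627158965558169443514270812404602356316174570496000000%:R) + T * ((715784588652877091677249701127966511591347755499458560000000%:R) + T * ((545890347246314884158553581505718190297742767188126501683200000000%:R) + T * ((248340181524406463915449911602453051593697153894607012534116352000000000%:R) + T * ((50651324788469717964483564112771492105797756292553061572250864320512000000000%:R))))))))))))).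
Lemma NrE T : Nr T = (27101076%:R) + T * ((344028632447280%:R) + T * ((2718355837247806712000%:R) + T * ((14904242033559031341650880000%:R) + T * ((59547426662993639512696588995840000%:R) + T * ((176672002967398884916153944905702046720000%:R) + T * ((389228217317373142618706939918198602609520640000%:R) + T * ((627158965558169443514270812404602356316174570496000000%:R) + T * ((715784588652877091677249701127966511591347755499458560000000%:R) + T * ((545890347246314884158553581505718190297742767188126501683200000000%:R) + T * ((248340181524406463915449911602453051593697153894607012534116352000000000%:R) + T * ((50651324788469717964483564112771492105797756292553061572250864320512000000000%:R)))))))))))). Proof. by rewrite [Nr]unlock. Qed.
Fact Kf_key : unit. Proof. exact: tt. Qed.
Definition Kf := locked_with Kf_key (fun T : rat => T * ((64%:R) + T * ((- 3659831040%:R) + T * ((69762308548684800%:R) + T * ((- 443260871959260385792000%:R)))))).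
Lemma KfE T : Kf T = T * ((64%:R) + T * ((- 3659831040%:R) + T * ((69762308548684800%:R) + T * ((- 443260871959260385792000%:R))))). Proof. by rewrite [Kf]unlock. Qed.
Fact Nf_key : unit. Proof. exact: tt. Qed.
Definition Nf := locked_with Nf_key (fun T : rat => 1 + T * Nr T).
Lemma NfE T : Nf T = 1 + T * Nr T. Proof. by rewrite [Nf]unlock. Qed.
Lemma G3id T : Mf T ^+ 3 + al * T * p3 T ^+ 2 * Mf T ^+ 2 + be * T ^+ 2 * p3 T ^+ 4 * Mf T + ga * T ^+ 3 * p3 T ^+ 6 = gf T * Nf T ^+ 2.
Proof. rewrite !(MfE, p3E, q4E, gfE, NfE, NrE) !(B2E, B4E, B6E, B8E) !(alE, beE, gaE). ring. Qed.

Fact T3_key : unit. Proof. exact: tt. Qed.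
Definition T3 := locked_with T3_key (fun T : rat => T * p3 T ^+ 2 / Mf T).
Lemma T3E T : T3 T = T * p3 T ^+ 2 / Mf T. Proof. by rewrite [T3]unlock. Qed.
Fact Z3_key : unit. Proof. exact: tt. Qed.
Definition Z3 := locked_with Z3_key (fun T Z : rat => Z * p3 T * Nf T / Mf T ^+ 2).
Lemma Z3E T Z : Z3 T Z = Z * p3 T * Nf T / Mf T ^+ 2. Proof. by rewrite [Z3]unlock. Qed.

Lemma gf_T3 T : Mf T != 0 -> gf (T3 T) = gf T * Nf T ^+ 2 / Mf T ^+ 3.
Proof.
move=> hM. have E := G3id T.
have H : gf (T3 T) = (Mf T ^+ 3 + al * T * p3 T ^+ 2 * Mf T ^+ 2 + be * T ^+ 2 * p3 T ^+ 4 * Mf T + ga * T ^+ 3 * p3 T ^+ 6) / Mf T ^+ 3.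
  rewrite [gf (T3 T)]gfE T3E. by field.
rewrite H. congr (_ / _). exact: E.
Qed.

Lemma step_curve T Z : Mf T != 0 -> Z ^+ 2 = T * gf T -> Z3 T Z ^+ 2 = T3 T * gf (T3 T).
Proof.
move=> hM hZ. rewrite gf_T3 //.
have -> : Z3 T Z ^+ 2 = Z ^+ 2 * p3 T ^+ 2 * Nf T ^+ 2 / Mf T ^+ 4 by rewrite Z3E; field.
rewrite hZ T3E. by field.
Qed.

Lemma I3_1 : I3 1.
Proof. exact: (I3_nat 1). Qed.
Lemma I3_0 : I3 0.
Proof. exact: (I3_nat 0). Qed.
Lemma U3_2 : U3 2.
Proof. by exists 2, 1; split => //; rewrite divr1. Qed.

Ltac i3 := repeat match goal with
  | |- I3 (_ + _) => apply: I3D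
  | |- I3 (_ * _) => apply: I3M
  | |- I3 (- _) => apply: I3N
  | |- I3 (_ ^+ _) => apply: I3X
  | |- I3 (_ %:R) => apply: I3_nat
  | |- I3 1 => exact: I3_1
  | |- I3 0 => exact: I3_0
  | H : I3 ?x |- I3 ?x => exact: H
  | H : U3 ?x |- I3 ?x => exact: (U3_I3 H)
  end.

Definition good (e : nat) (T Z : rat) :=
  [/\ (0 < e)%N, exists2 uT, U3 uT & T = (3 ^+ e) ^+ 2 * uT,
      exists2 uZ, U3 uZ & Z = 3 ^+ e * uZ & Z ^+ 2 = T * gf T].

Lemma step_good e T Z : good e T Z -> good e.+1 (T3 T) (Z3 T Z).
Proof.
case=> e0 [uT hu hT] [uZ hz hZ] hc.
pose R := (3 : rat) ^+ e.-1.
have hR : (3 : rat) ^+ e = 3 * R by rewrite /R -exprS prednK.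
have IR : I3 R by apply: I3X; apply: I3_nat.
pose S := R ^+ 2 * uT.
have IS : I3 S by rewrite /S; i3.
have hTS : T = 9 * S by rewrite hT hR /S; ring.
have IT : I3 T by rewrite hTS; i3.
pose P1 := 4 * al * S + 54 * be * S ^+ 2 + 972 * ga * S ^+ 3 + 729 * B8 * S ^+ 4.
have IP1 : I3 P1 by rewrite /P1 B8E alE beE gaE; i3.
have hp3 : p3 T = 3 * (1 + 3 * P1) by rewrite p3E hTS /P1 B2E B4E B6E; ring.
pose g1 := al + be * T + ga * T ^+ 2.
pose q41 := B2 + 5 * B4 * T + 10 * B6 * T ^+ 2 + 10 * B8 * T ^+ 3 + (B2 * B8 - B4 * B6) * T ^+ 4 + (B4 * B8 - B6 ^+ 2) * T ^+ 5.
have hg : gf T = 1 + T * g1 by rewrite gfE /g1; ring.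
have hq : q4 T = 2 + T * q41 by rewrite q4E /q41; ring.
have Ig1 : I3 g1 by rewrite /g1 alE beE gaE; i3.
have Iq41 : I3 q41 by rewrite /q41 B2E B4E B6E B8E alE beE gaE; i3.
pose M1 := 18 * P1 + 27 * P1 ^+ 2 - 12 * S * q41 - 24 * S * g1 - 108 * S ^+ 2 * g1 * q41.
have IM1 : I3 M1 by rewrite /M1; i3.
have hM : Mf T = 1 + 3 * M1 by rewrite MfE hp3 hg hq /M1 hTS; ring.
have UM : U3 (Mf T) by rewrite hM; apply: U3_add3 U3_1 IM1.
have hM0 : Mf T != 0 by apply: U3_neq0.
have hN : Nf T = 1 + 3 * (3 * S * Nr T) by rewrite NfE {1}hTS; ring.
have INr : I3 (Nr T) by rewrite NrE; i3.
have UN : U3 (Nf T) by rewrite hN; apply: U3_add3 U3_1 _; i3.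
have UP : U3 (1 + 3 * P1) by apply: U3_add3 U3_1 IP1.
split.
- by [].
- exists (uT * (1 + 3 * P1) ^+ 2 / Mf T).
    by apply: U3M; [apply: U3M => //; apply: U3M | apply: U3V].
  rewrite T3E hp3 [3 ^+ e.+1]exprS {1}hT. move: (3 ^+ e) (Mf T) hM0 (1 + 3 * P1) => t m hm p. by field.
- exists (uZ * (1 + 3 * P1) * Nf T / Mf T ^+ 2).
    by apply: U3M; [apply: U3M => //; apply: U3M | apply: U3V; apply: U3M].
  rewrite Z3E hp3 [3 ^+ e.+1]exprS {1}hZ. move: (3 ^+ e) (Mf T) hM0 (1 + 3 * P1) (Nf T) => t m hm p n. by field.
- exact: step_curve.
Qed.

Lemma nd3_nat (n k r : nat) : n = (3 * k + r)%N -> r = 1%N \/ r = 2%N -> nd3 n%:Z.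
Proof.
move=> -> [] ->; rewrite PoszD PoszM; [exact: nd3_31 | exact: nd3_32].
Qed.

Lemma natr_nd3 (n : nat) : nd3 n%:Z -> (n%:R : rat) != 0.
Proof. move=> h; have := intr_neq0 (nd3_neq0 h). by rewrite -pmulrn. Qed.

Definition uT0 : rat := - (30025238061841%:R / 585772938409029361580%:R).
Definition uZ0 : rat := 100455739228316935322540129193302272%:R / 4289124192154356323615835783931779751205%:R.
Fact T0_key : unit. Proof. exact: tt. Qed.
Definition T0 : rat := locked_with T0_key (9 * uT0).
Fact Z0_key : unit. Proof. exact: tt. Qed.
Definition Z0 : rat := locked_with Z0_key (3 * uZ0).

Lemma nd_a : nd3 (30025238061841%N)%:Z.
Proof.
have E : (30025238061841 = 3 * 10008412687280 + 1)%N.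
  ring.
exact: (nd3_nat E (or_introl erefl)).
Qed.
Lemma nd_b : nd3 (585772938409029361580%N)%:Z.
Proof.
have E : (585772938409029361580 = 3 * 195257646136343120526 + 2)%N.
  ring.
exact: (nd3_nat E (or_intror erefl)).
Qed.
Lemma nd_c : nd3 (100455739228316935322540129193302272%N)%:Z.
Proof.
have E : (100455739228316935322540129193302272 = 3 * 33485246409438978440846709731100757 + 1)%N.
  ring.
exact: (nd3_nat E (or_introl erefl)).
Qed.
Lemma nd_d : nd3 (4289124192154356323615835783931779751205%N)%:Z.
Proof.
have E : (4289124192154356323615835783931779751205 = 3 * 1429708064051452107871945261310593250401 + 2)%N.
  ring.
exact: (nd3_nat E (or_intror erefl)).
Qed.

Lemma good0 : good 1 T0 Z0.
Proof.
split.
- by [].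
- exists uT0; first by apply: U3N; apply: U3_natfrac; [exact: nd_a | exact: nd_b].
  rewrite [T0]unlock. move: uT0 => u. congr (_ * _).
- exists uZ0; first by apply: U3_natfrac; [exact: nd_c | exact: nd_d].
  rewrite [Z0]unlock expr1. by move: uZ0 => u.
-
  rewrite [T0]unlock [Z0]unlock /uT0 /uZ0 gfE alE beE gaE.
  by field.
Qed.

Fact dd_key : unit. Proof. exact: tt. Qed.
Definition dd : rat := locked_with dd_key (10166%:R).
Lemma ddE : dd = 10166%:R. Proof. by rewrite [dd]unlock. Qed.
Fact bb_key : unit. Proof. exact: tt. Qed.
Definition bb : rat := locked_with bb_key (1588966340%:R).
Lemma bbE : bb = 1588966340%:R. Proof. by rewrite [bb]unlock. Qed.
Fact ka_key : unit. Proof. exact: tt. Qed.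
Definition ka : rat := locked_with ka_key (- 38123240%:R).
Lemma kaE : ka = - 38123240%:R. Proof. by rewrite [ka]unlock. Qed.
Fact cc_key : unit. Proof. exact: tt. Qed.
Definition cc : rat := locked_with cc_key (6775269%:R).
Lemma ccE : cc = 6775269%:R. Proof. by rewrite [cc]unlock. Qed.
Fact aa_key : unit. Proof. exact: tt. Qed.
Definition aa : rat := locked_with aa_key (128941675300%:R).
Lemma aaE : aa = 128941675300%:R. Proof. by rewrite [aa]unlock. Qed.
Fact Df_key : unit. Proof. exact: tt. Qed.
Definition Df := locked_with Df_key (fun T Z : rat => 2 * Z - dd * T - 2 * bb * T ^+ 2).
Lemma DfE T Z : Df T Z = 2 * Z - dd * T - 2 * bb * T ^+ 2. Proof. by rewrite [Df]unlock. Qed.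
Fact wf_key : unit. Proof. exact: tt. Qed.
Definition wf := locked_with wf_key (fun T Z : rat => 2 * T * (2 + ka * T) / Df T Z).
Lemma wfE T Z : wf T Z = 2 * T * (2 + ka * T) / Df T Z. Proof. by rewrite [wf]unlock. Qed.
Fact vf_key : unit. Proof. exact: tt. Qed.
Definition vf := locked_with vf_key (fun T Z : rat => -1 + wf T Z * (wf T Z / T - dd) / 2).
Lemma vfE T Z : vf T Z = -1 + wf T Z * (wf T Z / T - dd) / 2. Proof. by rewrite [vf]unlock. Qed.
Fact hp_key : unit. Proof. exact: tt. Qed.
Definition hp := locked_with hp_key (fun w : rat => 1 + dd * w + cc * w ^+ 2 + bb * w ^+ 3 + aa * w ^+ 4).
Lemma hpE w : hp w = 1 + dd * w + cc * w ^+ 2 + bb * w ^+ 3 + aa * w ^+ 4. Proof. by rewrite [hp]unlock. Qed.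

Lemma QqE w : Qq (1 + 473 * w) = 473 ^+ 4 * hp w.
Proof. rewrite /Qq hpE ddE ccE bbE aaE. ring. Qed.

Lemma hv T Z : T != 0 -> Df T Z != 0 -> Z ^+ 2 = T * gf T -> hp (wf T Z) = vf T Z ^+ 2.
Proof.
move=> hT hD hZ.
have hwD : wf T Z * Df T Z = 2 * T * (2 + ka * T).
  rewrite wfE. move: (Df T Z) hD => D hD. by field.
have hvD : vf T Z * Df T Z ^+ 2 = - Df T Z ^+ 2 + T * (2 + ka * T) * (4 + 2 * ka * T - dd * Df T Z).
  have -> : vf T Z * Df T Z ^+ 2 = - Df T Z ^+ 2 + ((wf T Z * Df T Z) ^+ 2 / T - dd * (wf T Z * Df T Z) * Df T Z) / 2.
    rewrite vfE. move: (wf T Z) (Df T Z) => w D. by field.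
  rewrite hwD. move: (Df T Z) ka dd => D k d. by field.
have E : (hp (wf T Z) - vf T Z ^+ 2) * Df T Z ^+ 4 =
   (Df T Z ^+ 4 + dd * (wf T Z * Df T Z) * Df T Z ^+ 3 + cc * (wf T Z * Df T Z) ^+ 2 * Df T Z ^+ 2
    + bb * (wf T Z * Df T Z) ^+ 3 * Df T Z + aa * (wf T Z * Df T Z) ^+ 4) - (vf T Z * Df T Z ^+ 2) ^+ 2.
  rewrite hpE. move: (wf T Z) (vf T Z) (Df T Z) => w v D. ring.
rewrite hwD hvD in E.
have E2 : (Df T Z ^+ 4 + dd * (2 * T * (2 + ka * T)) * Df T Z ^+ 3 + cc * (2 * T * (2 + ka * T)) ^+ 2 * Df T Z ^+ 2
    + bb * (2 * T * (2 + ka * T)) ^+ 3 * Df T Z + aa * (2 * T * (2 + ka * T)) ^+ 4)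
    - (- Df T Z ^+ 2 + T * (2 + ka * T) * (4 + 2 * ka * T - dd * Df T Z)) ^+ 2 = (Z ^+ 2 - T * gf T) * Kf T.
  rewrite DfE gfE KfE ddE bbE kaE ccE aaE alE beE gaE. ring.
rewrite E2 hZ subrr mul0r in E. move/eqP: E. rewrite mulf_eq0 expf_eq0 (negbTE hD) andbF orbF subr_eq0.
by move/eqP.
Qed.

Lemma good_w e T Z : good e T Z ->
  [/\ T != 0, Df T Z != 0 & exists2 u, U3 u & wf T Z = 3 ^+ e * u].
Proof.
case=> e0 [uT hu hT] [uZ hz hZ] hc.
pose R := (3 : rat) ^+ e.-1.
have hR : (3 : rat) ^+ e = 3 * R by rewrite /R -exprS prednK.
have IR : I3 R by apply: I3X; apply: I3_nat.
have R0 : R != 0 by rewrite /R expf_neq0.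
have u0 : uT != 0 by apply: U3_neq0.
pose X := - (dd * R * uT + 18 * bb * R ^+ 3 * uT ^+ 2).
have IX : I3 X by rewrite /X ddE bbE; i3.
have UD : U3 (2 * uZ + 3 * X) by apply: U3_add3 => //; apply: U3M U3_2 hz.
have hD : Df T Z = 3 ^+ e * (2 * uZ + 3 * X).
  rewrite DfE hT hZ hR /X. ring.
have D0 : Df T Z != 0.
  rewrite hD; apply: mulf_neq0; [by rewrite expf_neq0 | exact: U3_neq0 UD].
split.
- rewrite hT; apply: mulf_neq0; [by rewrite !expf_neq0 | exact: u0].
- exact: D0.
- exists (2 * uT * (2 + 3 * (3 * ka * R ^+ 2 * uT)) / (2 * uZ + 3 * X)).
    apply: U3M; last exact: U3V.
    apply: U3M; first exact: U3M U3_2 hu.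
    apply: U3_add3 U3_2 _. rewrite kaE; i3.
  rewrite wfE hD hT hR. have UD0 := U3_neq0 UD.
  move: (2 * uZ + 3 * X) UD0 R0 => D hD0 hR0. move: ka => k. field. by rewrite hD0 hR0.
Qed.

Fixpoint st (k : nat) : rat * rat :=
  if k is k'.+1 then (T3 (st k').1, Z3 (st k').1 (st k').2) else (T0, Z0).

Lemma st_good k : good k.+1 (st k).1 (st k).2.
Proof. elim: k => [|k IH]; first exact: good0. exact: step_good IH. Qed.

Definition Ak (k : nat) : rat := 1 + 473 * wf (st k).1 (st k).2.

Lemma Ak_inj : injective Ak.
Proof.
move=> i j E.
have [_ _ [u hu hw]] := good_w (st_good i).
have [_ _ [u' hu' hw']] := good_w (st_good j).
have E' : wf (st i).1 (st i).2 = wf (st j).1 (st j).2.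
  move: E; rewrite /Ak => /addrI. apply: mulfI. by rewrite pnatr_eq0.
move: E'; rewrite hw hw' => /(U3_inj hu hu'). by case.
Qed.

Lemma Ak_good k : Qq (Ak k) = (473 ^+ 2 * vf (st k).1 (st k).2) ^+ 2.
Proof.
have [hT hD _] := good_w (st_good k).
have [_ _ _ hc] := st_good k.
rewrite /Ak QqE (hv hT hD hc). move: (vf _ _) => v. ring.
Qed.

Theorem theorem3 :
  forall s : seq rat, exists A : rat, A \notin s /\ has_AP_points (gA A) 16.
Proof.
move=> s.
have [k hk] : exists k, Ak k \notin s.
  pose L := map Ak (iota 0 (size s).+1).
  have uL : uniq L.
    rewrite /L (map_inj_uniq Ak_inj). exact: iota_uniq.
  case: (boolP (all (fun x => x \in s) L)) => [hall | ].
    have := uniq_leq_size uL (fun x hx => allP hall x hx).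
    by rewrite size_map size_iota ltnn.
  rewrite -has_predC => /hasP [x /mapP [k _ ->] hk]. by exists k.
exists (Ak k); split; first exact: hk.
exists 0, 1, (yv (Ak k) (473 ^+ 2 * vf (st k).1 (st k).2)).
split; first by rewrite oner_neq0.
move=> j hj. exact: (gA_sq (Ak_good k) hj).
Qed.
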